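(* Let $\Delta$ be a simplicial complex on $X=\{x_1,\ldots,x_n\}$ and $k\in\mathbb{N}$ a positive integer. Then $\Delta$ is shellable if and only if its expansion $\Delta^{\mathbf{k}}$ is $k$-shellable.
   Context: For faces $F_1,\dots,F_r$, $\langle F_1,\ldots,F_r\rangle$ denotes the simplicial complex with facets $F_1,\dots,F_r$. $\Delta$ is shellable if its facets can be ordered $F_1,\ldots,F_r$ so that for all $j\ge2$, $\langle F_j\rangle\cap\langle F_1,\ldots,F_{j-1}\rangle$ is pure of dimension $\dim F_j-1$. Expansion: let $X^{\mathbf{k}}=\{x_{ij}:1\le i\le n,1\le j\le k\}$; for $F\subseteq X$, $F^{\mathbf{k}}=\{x_{ij}: x_i\in F, 1\le j\le k\}$; if $\Delta=\langle F_1,\ldots,F_r\rangle$ then $\Delta^{\mathbf{k}}=\langle F_1^{\mathbf{k}},\ldots,F_r^{\mathbf{k}}\rangle$ on $X^{\mathbf{k}}$. $k$-shellability: let $\Gamma$ be a simplicial complex of dimension $d$ and $1\le k\le d+1$; $\Gamma$ is $k$-shellable if its facets can be ordered $F_1,\ldots,F_r$ such that for every $j=2,\ldots,r$, $\Gamma_j=\langle F_j\rangle\cap\langle F_1,\ldots,F_{j-1}\rangle$ satisfies (i) $\Gamma_j$ is generated by a nonempty set of faces of $\langle F_j\rangle$ of dimension $|F_j|-k-1$; (ii) if $\Gamma_j$ has more than one facet, then for every two distinct facets $\sigma,\tau$ of $\Gamma_j$, $F_j\subseteq\sigma\cup\tau$. *)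

(* Defs.v *)
From mathcomp Require Import all_boot.
Set Implicit Arguments. Unset Strict Implicit. Unset Printing Implicit Defensive.

Section Complexes.
Variable T : finType.

Definition is_complex (D : {set {set T}}) : Prop :=
  forall F G : {set T}, F \in D -> G \subset F -> G \in D.

Definition complex_on (D : {set {set T}}) : Prop :=
  is_complex D /\ forall x : T, [set x] \in D.

Definition facets (D : {set {set T}}) : {set {set T}} :=
  [set F in D | [forall G in D, (F \subset G) ==> (G == F)]].

Definition gen (A : {set {set T}}) : {set {set T}} :=
  [set G : {set T} | [exists F in A, G \subset F]].

(* Gamma_j = <F_j> \cap <F_1,...,F_{j-1}>  (0-based: j-th element, prefix take j). *)
Definition inter_prev (s : seq {set T}) (j : nat) : {set {set T}} :=
  gen [set nth set0 s j] :&: gen [set F in take j s].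

Definition facet_order (D : {set {set T}}) (s : seq {set T}) : Prop :=
  perm_eq s (enum (facets D)).

(* Gamma is pure of dimension m-1, i.e. all its facets have cardinality m. *)
Definition pure_card (G : {set {set T}}) (m : nat) : Prop :=
  forall S, S \in facets G -> #|S| = m.

(* Shellability (non-pure sense): Gamma_j pure of dimension dim F_j - 1. *)
Definition shellable (D : {set {set T}}) : Prop :=
  exists s : seq {set T}, facet_order D s /\
    forall j, 0 < j < size s ->
      pure_card (inter_prev s j) (#|nth set0 s j| - 1).

(* d + 1 where d = dim D (max cardinality of a face). *)
Definition dim_succ (D : {set {set T}}) : nat := \max_(F in D) #|F|.

(* k-shellability. Faces of dimension |F_j|-k-1 are those of cardinality
   |F_j|-k (requiring k <= |F_j| so that this is a genuine dimension >= -1). *)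
Definition k_shellable (k : nat) (D : {set {set T}}) : Prop :=
  1 <= k <= dim_succ D /\
  exists s : seq {set T}, facet_order D s /\
    forall j, 0 < j < size s ->
      let Fj := nth set0 s j in
      let Gj := inter_prev s j in
      (k <= #|Fj| /\
       exists A : {set {set T}}, A != set0 /\
         (forall G, G \in A -> G \subset Fj /\ #|G| = #|Fj| - k) /\
         Gj = gen A) /\
      (1 < #|facets Gj| ->
         forall S U, S \in facets Gj -> U \in facets Gj -> S != U ->
           Fj \subset S :|: U).

End Complexes.

(* Expansion: vertices x_{ij} encoded as pairs (x_i, j) in T * 'I_k. *)
Definition expand_face (T : finType) (k : nat) (F : {set T}) : {set T * 'I_k} :=
  [set p : T * 'I_k | p.1 \in F].

Definition expansion (T : finType) (k : nat) (D : {set {set T}})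
  : {set {set T * 'I_k}} :=
  gen [set expand_face k F | F in facets D].

(* Main.v *)
Require Import Defs.
From mathcomp Require Import all_boot.
Set Implicit Arguments. Unset Strict Implicit. Unset Printing Implicit Defensive.

Section Gen.
Variable T : finType.
Implicit Types A B : {set {set T}}.

Lemma facets_sub A : facets A \subset A.
Proof. by apply/subsetP => F; rewrite inE => /andP[]. Qed.

Lemma facets_gen A : facets (gen A) = facets A.
Proof.
apply/setP => F; apply/idP/idP.
- case/setIdP; rewrite inE => /exists_inP [G GA FG] /forall_inP H.
  have GgA : G \in gen A by rewrite inE; apply/exists_inP; exists G.
  have /eqP eGF := implyP (H G GgA) FG; subst G.
  rewrite inE GA /=; apply/forall_inP => G' G'A; apply/implyP => FG'.
  have : G' \in gen A by rewrite inE; apply/exists_inP; exists G'.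
  by move=> /H /implyP; apply.
- case/setIdP => FA /forall_inP H.
  rewrite inE; apply/andP; split.
    by rewrite inE; apply/exists_inP; exists F.
  apply/forall_inP => G; rewrite inE => /exists_inP [G' G'A GG'].
  apply/implyP => FG.
  have /eqP eG' := implyP (H G' G'A) (subset_trans FG GG').
  subst G'; by rewrite eqEsubset GG' FG.
Qed.

Lemma facets_above A G : G \in A -> exists2 F, F \in facets A & G \subset F.
Proof.
move=> GA.
have P0 : [pred F : {set T} | (F \in A) && (G \subset F)] G by rewrite /= GA subxx.
case: (arg_maxnP (fun F : {set T} => #|F|) P0) => F /andP[FA GF] Hmax.
exists F => //; rewrite inE FA; apply/forall_inP => H HA; apply/implyP => FH.
have := Hmax H; rewrite /= HA (subset_trans GF FH) => /(_ isT) HF.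
by rewrite eq_sym eqEcard FH HF.
Qed.

Lemma gen_facets A : gen (facets A) = gen A.
Proof.
apply/setP => W; rewrite !inE; apply/exists_inP/exists_inP => -[F FA WF].
- by exists F => //; apply: (subsetP (facets_sub A)).
- have [G GA FG] := facets_above FA; exists G => //; exact: subset_trans WF FG.
Qed.

Lemma facets_idem A : facets (facets A) = facets A.
Proof.
apply/eqP; rewrite eqEsubset facets_sub; apply/subsetP => F FA.
rewrite inE FA /=; apply/forall_inP => G /(subsetP (facets_sub A)) GA.
by case/setIdP: FA => _ /forall_inP; apply.
Qed.

Definition Bset (s : seq {set T}) j : {set {set T}} :=
  [set nth set0 s j :&: F | F in [set F in take j s]].

Lemma inter_prevE s j : inter_prev s j = gen (Bset s j).
Proof.
apply/setP => W; rewrite !inE; apply/andP/exists_inP.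
- case=> /exists_inP [F1]; rewrite inE => /eqP -> W1.
  move=> /exists_inP [F2 F2s W2]; exists (nth set0 s j :&: F2).
    by apply/imsetP; exists F2.
  by rewrite subsetI W1.
- case=> X /imsetP [F Fs ->]; rewrite subsetI => /andP[W1 W2]; split.
    by apply/exists_inP; exists (nth set0 s j); rewrite ?inE.
  by apply/exists_inP; exists F.
Qed.

Lemma facets_nonempty A : A != set0 -> facets A != set0.
Proof.
case/set0Pn => G GA; have [F FA _] := facets_above GA.
by apply/set0Pn; exists F.
Qed.

Lemma cover_lemma (F S0 U0 : {set T}) :
  S0 \subset F -> U0 \subset F -> #|S0| = #|F| - 1 -> #|U0| = #|F| - 1 ->
  S0 != U0 -> F \subset S0 :|: U0.
Proof.
move=> SF UF cS cU neq; apply/subsetP => x xF; rewrite inE.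
apply/negPn/negP; rewrite negb_or => /andP[xS xU].
have cFx : #|F :\ x| = #|F| - 1.
  by rewrite (cardsD1 x F) xF add1n subSS subn0.
have eS : S0 = F :\ x.
  apply/eqP; rewrite eqEcard cS cFx leqnn andbT.
  apply/subsetP => y yS; rewrite !inE (subsetP SF) // andbT.
  by apply/eqP => yx; rewrite -yx yS in xS.
have eU : U0 = F :\ x.
  apply/eqP; rewrite eqEcard cU cFx leqnn andbT.
  apply/subsetP => y yS; rewrite !inE (subsetP UF) // andbT.
  by apply/eqP => yx; rewrite -yx yS in xU.
by rewrite eS eU eqxx in neq.
Qed.

End Gen.

Section Exp.
Variable T : finType.
Variable k : nat.
Hypothesis hk : 0 < k.
Local Notation e := (@expand_face T k).

Lemma cardE F : #|e F| = #|F| * k.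
Proof.
have -> : e F = setX F [set: 'I_k] by apply/setP => -[x i]; rewrite !inE andbT.
by rewrite cardsX cardsT card_ord.
Qed.

Lemma esub F G : (e F \subset e G) = (F \subset G).
Proof.
apply/subsetP/subsetP => H.
- move=> x xF; have := H (x, Ordinal hk); rewrite !inE /=; exact.
- by move=> p; rewrite !inE; apply: H.
Qed.

Lemma einj : injective e.
Proof. by move=> F G eq; apply/eqP; rewrite eqEsubset -!esub eq subxx. Qed.

Lemma eI F G : e (F :&: G) = e F :&: e G.
Proof. by apply/setP => p; rewrite !inE. Qed.

Lemma eU F G : e (F :|: G) = e F :|: e G.
Proof. by apply/setP => p; rewrite !inE. Qed.

Lemma facets_e (A : {set {set T}}) : facets (e @: A) = e @: facets A.
Proof.
apply/setP => W; apply/idP/idP.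
- case/setIdP => /imsetP [F FA ->] /forall_inP H.
  apply/imsetP; exists F => //; rewrite inE FA; apply/forall_inP => G GA.
  apply/implyP => FG.
  have /implyP := H _ (imset_f e GA); rewrite esub => /(_ FG) /eqP /einj ->.
  by [].
- case/imsetP => F /setIdP [FA /forall_inP H] ->.
  rewrite inE imset_f //=; apply/forall_inP => W' /imsetP [G GA ->].
  rewrite esub; apply/implyP => FG.
  by rewrite (eqP (implyP (H G GA) FG)).
Qed.

Lemma inter_prev_map (s : seq {set T}) j : j < size s ->
  inter_prev (map e s) j = gen (e @: Bset s j).
Proof.
move=> js; rewrite inter_prevE; congr gen.
rewrite /Bset (nth_map set0) // -map_take.
apply/setP => W; apply/imsetP/imsetP.
- case=> X; rewrite inE => /mapP [F Fs ->] ->.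
  exists (nth set0 s j :&: F); last by rewrite eI.
  by apply/imsetP; exists F; rewrite ?inE.
- case=> X /imsetP [F Fs ->] ->; exists (e F); last by rewrite eI.
  by rewrite inE; apply/mapP; exists F; rewrite // inE in Fs.
Qed.


Lemma step (D : {set {set T}}) (s : seq {set T}) j :
  facet_order D s -> (forall F, F \in facets D -> 0 < #|F|) -> 0 < j < size s ->
  (pure_card (inter_prev s j) (#|nth set0 s j| - 1) <->
   ((k <= #|nth set0 (map e s) j| /\
     exists A : {set {set (T * 'I_k)}}, A != set0 /\
       (forall G, G \in A -> G \subset nth set0 (map e s) j /\
                              #|G| = #|nth set0 (map e s) j| - k) /\
       inter_prev (map e s) j = gen A) /\
    (1 < #|facets (inter_prev (map e s) j)| ->
     forall S U, S \in facets (inter_prev (map e s) j) ->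
       U \in facets (inter_prev (map e s) j) -> S != U ->
       nth set0 (map e s) j \subset S :|: U))).
Proof.
move=> fo hF /andP[j0 js].
have Fjin : nth set0 s j \in facets D.
  by rewrite -mem_enum -(perm_mem fo) mem_nth.
rewrite (nth_map set0) // inter_prev_map // inter_prevE.
set Fj := nth set0 s j; set B := Bset s j.
have fB : facets (gen (e @: B)) = e @: facets B by rewrite facets_gen facets_e.
have BsubF : forall X, X \in B -> X \subset Fj.
  by move=> X /imsetP [F _ ->]; apply: subsetIl.
have Bne : B != set0.
  apply/set0Pn; exists (Fj :&: nth set0 (take j s) 0); apply/imsetP.
  exists (nth set0 (take j s) 0) => //; rewrite inE mem_nth // size_take js //.
have cF := hF _ Fjin.
split.
- move=> hp; rewrite /pure_card facets_gen in hp.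
  split; first split.
  + by rewrite cardE leq_pmull.
  + exists (e @: facets B); split.
      have /set0Pn [F FB] := facets_nonempty Bne.
      by apply/set0Pn; exists (e F); apply: imset_f.
    split.
      move=> G /imsetP [F FB ->]; split.
        by rewrite esub; apply: BsubF; apply: (subsetP (facets_sub B)).
      by rewrite !cardE hp // mulnBl mul1n.
    by rewrite -facets_e gen_facets.
  + rewrite fB => _ S U /imsetP [S0 S0B ->] /imsetP [U0 U0B ->] neq.
    rewrite -eU esub; apply: cover_lemma.
    * by apply: BsubF; apply: (subsetP (facets_sub B)).
    * by apply: BsubF; apply: (subsetP (facets_sub B)).
    * exact: hp.
    * exact: hp.
    * by apply/eqP => h; rewrite h eqxx in neq.
- case=> [[_ [A [_ [HA eqA]]]] _] S SF.
  rewrite facets_gen in SF.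
  have : e S \in facets (gen (e @: B)) by rewrite fB imset_f.
  rewrite eqA facets_gen => /(subsetP (facets_sub A)) /HA [_].
  rewrite !cardE => h; apply/eqP; by rewrite -(eqn_pmul2r hk) mulnBl mul1n h.
Qed.
End Exp.

Theorem theorem2p8 (n k : nat) (D : {set {set 'I_n}}) :
  0 < n -> 0 < k -> complex_on D ->
  (shellable D <-> k_shellable k (expansion k D)).
Proof.
move=> n0 k0 [cD sD].
pose x0 : 'I_n := Ordinal n0.
pose e := @expand_face (ordinal n) k.
have Fpos : forall F, F \in facets D -> 0 < #|F|.
  move=> F FD; rewrite card_gt0; apply/eqP => F0.
  have := implyP (forall_inP (setIdP FD).2 _ (sD x0)).
  rewrite F0 sub0set => /(_ isT) /eqP /setP /(_ x0).
  by rewrite !inE eqxx.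
have fE : facets (expansion k D) = e @: facets D.
  by rewrite /expansion facets_gen facets_e // facets_idem.
have permE : perm_eq (enum (e @: facets D)) (map e (enum (facets D))).
  apply: uniq_perm; first exact: enum_uniq.
    by rewrite (map_inj_uniq (einj k0)) enum_uniq.
  move=> F; rewrite mem_enum; apply/imsetP/mapP => -[G GD ->]; exists G => //;
    by rewrite ?mem_enum // -mem_enum.
have foE : forall s, facet_order D s <-> facet_order (expansion k D) (map e s).
  move=> s; rewrite /facet_order fE; split => h.
  - by apply: perm_trans (perm_map e h) _; rewrite perm_sym.
  - apply: (perm_map_inj (einj k0)); exact: perm_trans h permE.
split.
- case=> s [fo hs]; split.
  + apply/andP; split => //.
    have [F0 F0D _] := facets_above (sD x0).
    have F0e : e F0 \in expansion k D.
      by rewrite inE; apply/exists_inP; exists (e F0); rewrite ?imset_f.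
    have := leq_bigmax_cond (P := fun F => F \in expansion k D) (F := fun F => #|F|) (e F0) F0e.
    rewrite /dim_succ; apply: leq_trans.
    by rewrite cardE // leq_pmull // Fpos.
  + exists (map e s); split; first by apply/foE.
    move=> j hj; rewrite size_map in hj.
    exact/(step k0 fo Fpos hj)/hs.
- case=> _ [s' [fo' hs']].
  pose s := map (fun E : {set 'I_n * 'I_k} => [set x : 'I_n | (x, Ordinal k0) \in E]) s'.
  have es : map e s = s'.
    rewrite -map_comp; apply: map_id_in => E Es.
    have : E \in e @: facets D by rewrite -fE -mem_enum -(perm_mem fo').
    case/imsetP => F _ -> /=.
    by congr expand_face; apply/setP => x; rewrite !inE.
  exists s; split; first by apply/foE; rewrite es.
  move=> j hj; apply/(step k0 _ Fpos hj); first by apply/foE; rewrite es.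
  rewrite es; apply: hs'; by rewrite -es size_map.
Qed.
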